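(* The reflection length and codimension functions do not coincide (i.e. there exists $g$ with $\ell(g)\neq\operatorname{codim}(g)$) in the following groups: (a) $G(m,p,n)$ with $1<p<m$ and $n\ge 2$; (b) $G(m,m,n)$ with $m\ge 3$ and $n\ge 3$.
   Context: $G(m,1,n)$ is the group of $n\times n$ monomial matrices whose nonzero entries are $m$-th roots of unity, acting on $V=\mathbb{C}^n$; for $p\mid m$, $G(m,p,n)$ is the subgroup of elements whose nonzero entries multiply to an $(m/p)$-th root of unity. A reflection is an element of finite order fixing a hyperplane pointwise. $\ell(g)$ is the minimal number of reflections of the group whose product is $g$ ($\ell(1)=0$), and $\operatorname{codim}(g)=n-\dim\{v\in V:gv=v\}$. *)

(* Defs.v *)
From HB Require Import structures.
From mathcomp Require Import all_boot all_order all_algebra all_fingroup all_field.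
Set Implicit Arguments. Unset Strict Implicit. Unset Printing Implicit Defensive.
Import Order.TTheory GRing.Theory Num.Theory.
Local Open Scope ring_scope.

(* Matrices act on column vectors of V = algC^n (algC = algebraic complex numbers,
   which contain all roots of unity). *)

Definition monomial_mx (n : nat) (s : 'S_n) (d : 'I_n -> algC) : 'M[algC]_n :=
  \matrix_(i, j) (if j == s i then d i else 0).

Definition in_Gmpn (m p n : nat) (g : 'M[algC]_n) : Prop :=
  exists (s : 'S_n) (d : 'I_n -> algC),
    [/\ g = monomial_mx s d,
        forall i, d i ^+ m = 1 &
        (\prod_(i < n) d i) ^+ (m %/ p) = 1].

(* codim g = n - dim {v in V | g v = v}.  The fixed space of g on column
   vectors is (via transposition) the row kernel of g^T - 1. *)
Definition codim (n : nat) (g : 'M[algC]_n) : nat :=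
  (n - \rank (kermx (g^T - 1%:M)))%N.

Definition is_reflection (m p n : nat) (r : 'M[algC]_n) : Prop :=
  [/\ in_Gmpn m p r,
      exists k : nat, (0 < k)%N /\ iter k (mulmx r) 1%:M = 1%:M &
      \rank (kermx (r^T - 1%:M)) = n.-1 /\ r != 1%:M].

Definition prod_of_refl (m p n : nat) (g : 'M[algC]_n) (k : nat) : Prop :=
  exists rs : seq 'M[algC]_n,
    [/\ size rs = k, forall r, r \in rs -> is_reflection m p r &
        g = foldr mulmx 1%:M rs].

Definition refl_length_is (m p n : nat) (g : 'M[algC]_n) (k : nat) : Prop :=
  prod_of_refl m p g k /\ forall k', (k' < k)%N -> ~ prod_of_refl m p g k'.

(* Main.v *)
Require Import Defs.
From HB Require Import structures.
From mathcomp Require Import all_boot all_order all_algebra all_fingroup all_field.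
From mathcomp Require Import zify ring.
Set Implicit Arguments. Unset Strict Implicit. Unset Printing Implicit Defensive.
Import Order.TTheory GRing.Theory Num.Theory.
Local Open Scope ring_scope.


Lemma monoE n (s : 'S_n) d i j : monomial_mx s d i j = if j == s i then d i else 0.
Proof. by rewrite mxE. Qed.

Lemma monoM n (s t : 'S_n) d e :
  monomial_mx s d *m monomial_mx t e = monomial_mx (s * t) (fun i => d i * e (s i)).
Proof.
apply/matrixP=> i j; rewrite !mxE (bigD1 (s i)) //= big1 => [|k hk].
  rewrite !mxE eqxx permM; case: eqP => _; by rewrite ?mulr0 addr0.
by rewrite !mxE (negbTE hk) mul0r.
Qed.

Lemma mono1 n : monomial_mx (1 : 'S_n) (fun _ => 1) = 1%:M.
Proof. by apply/matrixP=> i j; rewrite !mxE perm1 eq_sym; case: eqP. Qed.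

Lemma mono_eq n (s t : 'S_n) d e : s = t -> d =1 e -> monomial_mx s d = monomial_mx t e.
Proof. by move=> -> de; apply/matrixP=> i j; rewrite !mxE de. Qed.

Lemma mono_det n (s : 'S_n) d : \det (monomial_mx s d) = (-1) ^+ s * \prod_i d i.
Proof.
have -> : monomial_mx s d = diag_mx (\row_i d i) *m perm_mx s.
  apply/matrixP=> i j; rewrite mul_diag_mx !mxE; case: eqP => [->|h].
    by rewrite eqxx mulr1.
  by case: eqP => [h'|]; [rewrite h' in h|]; rewrite ?mulr0.
by rewrite det_mulmx det_diag det_perm mulrC; congr (_ * _); apply: eq_bigr => i _; rewrite mxE.
Qed.

Lemma rank_mxsub n k (f g : 'I_k -> 'I_n) (A : 'M[algC]_n) :
  \det (mxsub f g A) != 0 -> (k <= \rank A)%N.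
Proof.
move=> hd.
have ->: k = \rank (mxsub f g A) by rewrite mxrank_unit // unitmxE unitfE.
have -> : mxsub f g A = rowsub f 1%:M *m (A *m colsub g 1%:M).
  by rewrite -[A in LHS]mul1mx mxsub_mul -[A in colsub _ A]mulmx1 -mulmx_colsub.
apply: leq_trans (mxrankM_maxr _ _) _; exact: mxrankM_maxl.
Qed.

Lemma rank_uv n (A : 'M[algC]_n) (u : 'cV_n) (v : 'rV_n) : A = u *m v -> (\rank A <= 1)%N.
Proof. by move=> ->; apply: leq_trans (mxrankM_maxr _ _) (rank_leq_row _). Qed.

Lemma uvE n (u : 'cV[algC]_n) (v : 'rV_n) i j : (u *m v) i j = u i 0 * v 0 j.
Proof. by rewrite mxE big_ord1. Qed.

Lemma codimE n (g : 'M[algC]_n) : codim g = \rank (g^T - 1%:M).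
Proof. by rewrite /codim mxrank_ker subKn // rank_leq_row. Qed.

Lemma refl_rank m p n (r : 'M[algC]_n) : is_reflection m p r -> \rank (r^T - 1%:M) = 1%N.
Proof.
case=> _ _ [hk hr]; move: hk; rewrite mxrank_ker.
have := rank_leq_row (r^T - 1%:M).
case e: (\rank (r^T - 1%:M)) => [|x] hx hk.
  move/eqP: e; rewrite mxrank_eq0 subr_eq0 => /eqP e.
  by move: hr; rewrite -[r]trmxK e trmx1 eqxx.
by move: hk hx; case: n {r e hr} => //= n'; lia.
Qed.

Lemma codim_mul n (a b : 'M[algC]_n) : (codim (a *m b) <= codim a + codim b)%N.
Proof.
rewrite !codimE trmx_mul.
have -> : b^T *m a^T - 1%:M = b^T *m (a^T - 1%:M) + (b^T - 1%:M).
  by rewrite mulmxBr mulmx1 addrA subrK.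
apply: leq_trans (mxrank_add _ _) _; apply: leq_add => //; exact: mxrankM_maxr.
Qed.

Lemma codim_prod m p n (rs : seq 'M[algC]_n) :
  (forall r, r \in rs -> is_reflection m p r) -> (codim (foldr mulmx 1%:M rs) <= size rs)%N.
Proof.
elim: rs => [|r rs IH] h /=.
  by rewrite codimE trmx1 subrr mxrank0.
apply: leq_trans (codim_mul _ _) _.
rewrite codimE (refl_rank (h r (mem_head _ _))) add1n ltnS IH // => x hx.
by apply: h; rewrite inE hx orbT.
Qed.


Lemma det_1uv n (C : 'cV[algC]_n) (R : 'rV_n) :
  \det (1%:M + C *m R) = 1 + (R *m C) 0 0.
Proof.
pose M := block_mx 1%:M (- C) R (1%:M : 'M_1).
have e1 : block_mx 1%:M 0 R 1%:M *m block_mx 1%:M (- C) 0 (1%:M + R *m C) = M.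
  rewrite mulmx_block !mul1mx !mulmx1 ?mul0mx ?mulmx0 ?addr0 ?add0r.
  by rewrite mulmxN addrCA addNr addr0.
have e2 : block_mx (1%:M + C *m R) (- C) 0 1%:M *m block_mx 1%:M 0 R 1%:M = M.
  rewrite mulmx_block !mul1mx !mulmx1 ?mul0mx ?mulmx0 ?addr0 ?add0r.
  by rewrite mulNmx addrK.

have := congr1 determinant e1; rewrite -e2 !det_mulmx !det_lblock !det_ublock
  !det1 !mul1r !mulr1 => <-.
by rewrite det_mx11 !mxE eqxx.
Qed.

Lemma refl_det m n (r : 'M[algC]_n) : (0 < m)%N -> is_reflection m m r -> \det r = -1.
Proof.
move=> m0 hr; have hrk := refl_rank hr.
case: hr => [[s [d [rE _ hp]]] [k [k0 hk]] [_ hne]].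
rewrite divnn m0 expr1 in hp.
have hdet : \det r = (-1) ^+ s by rewrite rE mono_det hp mulr1.
set N := r - 1%:M.
have rN : \rank N = 1%N.
  by rewrite -mxrank_tr /N linearB /= trmx1.
have [C [R eN]] : exists (C : 'cV_n) (R : 'rV_n), N = C *m R.
  rewrite -(mulmx_base N); move: (col_base N) (row_base N); rewrite rN.
  by move=> C R; exists C, R.
have er : r = 1%:M + N by rewrite /N addrC subrK.
have hd : \det r = 1 + (R *m C) 0 0 by rewrite er eN det_1uv.
case: (boolP ((R *m C) 0 0 == 0)) => [/eqP c0|c0].
  have NN : N *m N = 0.
    rewrite eN mulmxA -(mulmxA C) [R *m C]mx11_scalar c0.
    by rewrite (_ : 0%:M = 0 :> 'M_1) ?mulmx0 ?mul0mx //; apply/matrixP=> i j; rewrite !mxE; case: (i == j).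
  have pow : forall j, iter j (mulmx r) 1%:M = 1%:M + j%:R *: N.
    elim=> [|j IH] /=; first by rewrite scale0r addr0.
    rewrite IH er mulmxDr mulmx1 mulmxDl mul1mx -scalemxAr NN scaler0 addr0.
    by rewrite -addrA -natr1 scalerDl scale1r (addrC N).
  move: hk; rewrite pow => /eqP; rewrite -subr_eq0 addrC addKr scaler_eq0.
  rewrite pnatr_eq0 (gtn_eqF k0) /= => /eqP N0.
  by move: hne; rewrite er N0 addr0 eqxx.
move: hdet; rewrite hd; case: (odd_perm s) => //=; rewrite expr0 => /eqP.
by rewrite -subr_eq0 addrC addKr (negbTE c0).
Qed.


Definition tdiag (m n : nat) (i j : 'I_n) (a : algC) : 'I_n -> algC :=
  fun k => if k == i then a else if k == j then a ^+ m.-1 else 1.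
Definition Tr (m n : nat) (i j : 'I_n) (a : algC) :=
  monomial_mx (tperm i j) (tdiag m i j a).
Definition ddiag n (i : 'I_n) (w : algC) : 'I_n -> algC := fun k => if k == i then w else 1.
Definition Dg n (i : 'I_n) (w : algC) := monomial_mx 1 (ddiag i w).

Lemma prod2 n (i j : 'I_n) (x y : algC) : i != j ->
  \prod_k (if k == i then x else if k == j then y else 1) = x * y.
Proof.
move=> ij; rewrite (bigD1 i) //= eqxx (bigD1 j) /=; last by rewrite eq_sym.
rewrite (eq_sym j i) (negbTE ij) eqxx big1 ?mulr1 //.
by move=> k /andP [ki kj]; rewrite (negbTE ki) (negbTE kj).
Qed.

Lemma prod1 n (i : 'I_n) (x : algC) : \prod_k (if k == i then x else 1) = x.
Proof.
rewrite (bigD1 i) //= eqxx big1 ?mulr1 // => k ki; by rewrite (negbTE ki).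
Qed.

Ltac bsimp := repeat (match goal with
 | H : is_true (?a != ?b) |- context [?a == ?b] => rewrite (negbTE H)
 | H : is_true (?a != ?b) |- context [?b == ?a] => rewrite (eq_sym b a) (negbTE H)
 | |- context [?a == ?a] => rewrite eqxx
 | |- _ => rewrite tpermL
 | |- _ => rewrite tpermR
 | H1 : is_true (?x != ?i), H2 : is_true (?x != ?j) |- _ =>
     rewrite (@tpermD _ i j x); [| by rewrite eq_sym | by rewrite eq_sym]
 end; rewrite /=).

Lemma am1 m (a : algC) : (0 < m)%N -> a ^+ m = 1 -> a * a ^+ m.-1 = 1.
Proof. by move=> m0 am; rewrite -exprS prednK. Qed.

Lemma rank1_ker n (A : 'M[algC]_n) (u : 'cV_n) (v : 'rV_n) (x y : 'I_n) :
  A = u *m v -> A x y != 0 -> \rank (kermx A) = n.-1.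
Proof.
move=> e nz; rewrite mxrank_ker.
have h1 := rank_uv e.
have h0 : \rank A != 0%N by rewrite mxrank_eq0; apply: contraNneq nz => ->; rewrite mxE.
have : \rank A = 1%N by lia.
by move=> ->; rewrite subn1.
Qed.

Lemma Tr_refl m p n (i j : 'I_n) a : (0 < m)%N -> (p %| m)%N -> i != j -> a ^+ m = 1 ->
  is_reflection m p (Tr m i j a).
Proof.
move=> m0 pm ij am.
have ji : j != i by rewrite eq_sym.
have sq : Tr m i j a *m Tr m i j a = 1%:M.
  rewrite /Tr monoM tperm2 -mono1; apply: mono_eq => // k.
  rewrite /tdiag; have [->|ki] := eqVneq k i.
    by rewrite tpermL !eqxx ?(negbTE ji) am1.
  have [->|kj] := eqVneq k j.
    by rewrite tpermR !eqxx ?(negbTE ji) mulrC am1.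
  rewrite tpermD; [by rewrite (negbTE ki) (negbTE kj) mulr1 | by rewrite eq_sym | by rewrite eq_sym].
split.
- exists (tperm i j), (tdiag m i j a); split => //.
    move=> k; rewrite /tdiag; case: ifP => _ //; case: ifP => _; last by rewrite expr1n.
    by rewrite -exprM mulnC exprM am expr1n.
  by rewrite /tdiag prod2 // am1 // expr1n.
- by exists 2%N; split => //=; rewrite mulmx1 sq.
split.
  pose u : 'cV[algC]_n := \col_x (if x == i then -1 else if x == j then a else 0).
  pose v : 'rV[algC]_n := \row_y (if y == i then 1 else if y == j then - a ^+ m.-1 else 0).
  apply: (@rank1_ker _ _ u v i i).
    apply/matrixP=> x y; rewrite uvE !mxE /tdiag.
    have [->|xi] := eqVneq x i; [|have [->|xj] := eqVneq x j];
    have [->|yi] := eqVneq y i; try (have [->|yj] := eqVneq y j); bsimp; try ring.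
    - by rewrite mulrN am1 // sub0r.
    - by rewrite mul0r; case: (x == y); rewrite /= ?subrr.
  by rewrite !mxE; bsimp; rewrite sub0r oppr_eq0 oner_eq0.
apply/eqP=> /matrixP /(_ i i); rewrite !mxE; bsimp.
by move/eqP; rewrite eq_sym oner_eq0.
Qed.

Lemma Dg_pow n (i : 'I_n) w k : iter k (mulmx (Dg i w)) 1%:M = Dg i (w ^+ k).
Proof.
elim: k => [|k IH] /=.
  rewrite -mono1 /Dg; apply: mono_eq => // l; rewrite /ddiag; by case: ifP.
rewrite IH /Dg monoM mul1g; apply: mono_eq => // l; rewrite perm1 /ddiag.
by case: ifP; rewrite ?exprS ?mulr1.
Qed.

Lemma Dg_refl m p n (i : 'I_n) w : (0 < m)%N -> (p %| m)%N -> w ^+ (m %/ p) = 1 -> w != 1 ->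
  is_reflection m p (Dg i w).
Proof.
move=> m0 pm wp w1.
have wm : w ^+ m = 1 by rewrite -{1}(divnK pm) exprM wp expr1n.
split.
- exists 1%g, (ddiag i w); split => //.
    by move=> k; rewrite /ddiag; case: ifP; rewrite ?expr1n.
  by rewrite /ddiag prod1.
- exists m; split => //; rewrite Dg_pow wm -mono1 /Dg; apply: mono_eq => // l.
  by rewrite /ddiag; case: ifP.
split.
  pose u : 'cV[algC]_n := \col_x (if x == i then w - 1 else 0).
  pose v : 'rV[algC]_n := \row_y (if y == i then 1 else 0).
  apply: (@rank1_ker _ _ u v i i).
    apply/matrixP=> x y; rewrite uvE !mxE /ddiag perm1.
    have [->|yi] := eqVneq y i.
      by case: (x == i); rewrite /= ?mulr1 ?subr0.
    by rewrite mulr0; case: (x == y); rewrite /= ?subrr.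
  by rewrite !mxE perm1 /ddiag; bsimp; rewrite subr_eq0.
apply/eqP=> /matrixP /(_ i i); rewrite !mxE perm1 /ddiag; bsimp.
by move/eqP; rewrite (negbTE w1).
Qed.



Lemma ord3_cases (x : 'I_3) :
  x = @Ordinal 3 0 isT \/ x = @Ordinal 3 1 isT \/ x = @Ordinal 3 2 isT.
Proof.
case: x => [[|[|[|k]]] h]; [left|right;left|right;right|by []]; exact: val_inj.
Qed.

Lemma diag_minor n k (A : 'M[algC]_n) (f : 'I_k -> 'I_n) :
  injective f -> (forall a b, a != b -> A a b = 0) -> (forall x, A (f x) (f x) != 0) ->
  (k <= \rank A)%N.
Proof.
move=> fi off on; apply: (@rank_mxsub _ _ f f).
have -> : mxsub f f A = diag_mx (\row_x A (f x) (f x)).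
  apply/matrixP=> x y; rewrite !mxE; have [->|xy] := eqVneq x y; first by rewrite mulr1n.
  by rewrite mulr0n off //; apply: contra xy => /eqP /fi ->.
by rewrite det_diag; apply/prodf_neq0=> x _; rewrite mxE.
Qed.

Lemma rank_le_diag n (A : 'M[algC]_n) (c : 'I_n -> algC) (s : seq 'I_n) :
  (forall a b, A a b = if a == b then (if a \in s then c a else 0) else 0) ->
  (\rank A <= size s)%N.
Proof.
elim: s A => [|x s IH] A hA /=.
  have -> : A = 0 by apply/matrixP=> a b; rewrite hA mxE; case: eqP.
  by rewrite mxrank0.
pose B := \matrix_(a, b) (if a == b then (if a \in s then c a else 0) else 0).
pose D := \matrix_(a, b) (if a == b then (if a == x then c a - (if a \in s then c a else 0) else 0) else 0).
have -> : A = B + D.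
  apply/matrixP=> a b; rewrite hA !mxE inE; case: eqP => [->|_]; last by rewrite addr0.
  by case: (b == x); case: (b \in s); rewrite //= ?subrr ?addr0 ?subrK ?add0r ?subr0.
apply: leq_trans (mxrank_add _ _) _; rewrite -add1n (addnC 1%N) leq_add //.
  by apply: IH => a b; rewrite mxE.
pose u : 'cV[algC]_n := \col_a (if a == x then c a - (if a \in s then c a else 0) else 0).
pose v : 'rV[algC]_n := \row_b (if b == x then 1 else 0).
apply: (@rank_uv _ _ u v); apply/matrixP=> a b; rewrite uvE !mxE.
case: (eqVneq a x) => [ax|ax]; case: (eqVneq b x) => [bx|bx];
  rewrite ?mulr1 ?mulr0 ?mul0r ?if_same //.
- by rewrite ax bx eqxx.
- by rewrite ax eq_sym (negbTE bx).
Qed.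


Lemma det_prod m n (rs : seq 'M[algC]_n) : (0 < m)%N ->
  (forall r, r \in rs -> is_reflection m m r) -> \det (foldr mulmx 1%:M rs) = (-1) ^+ size rs.
Proof.
move=> m0; elim: rs => [|r rs IH] h /=; first by rewrite det1.
rewrite det_mulmx IH ?(refl_det m0 (h r (mem_head _ _))) ?exprS //.
by move=> x hx; apply: h; rewrite inE hx orbT.
Qed.

Lemma partB m n : (3 <= m)%N -> (3 <= n)%N ->
  exists (g : 'M[algC]_n) (k : nat),
    [/\ in_Gmpn m m g, refl_length_is m m g k & k <> codim g].
Proof.
move=> m3 n3.
have m0 : (0 < m)%N by lia.
have [z zp] := C_prim_root_exists m0.
have zm : z ^+ m = 1 := prim_expr_order zp.
have znz : forall k, (0 < k < m)%N -> z ^+ k != 1.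
  move=> k hk; rewrite -(prim_order_dvd zp); apply/negP => /dvdn_leq; lia.
pose i0 := widen_ord n3 (@Ordinal 3 0 isT).
pose i1 := widen_ord n3 (@Ordinal 3 1 isT).
pose i2 := widen_ord n3 (@Ordinal 3 2 isT).
have d01 : i0 != i1 by [].
have d02 : i0 != i2 by [].
have d12 : i1 != i2 by [].
have d10 : i1 != i0 by [].
have d20 : i2 != i0 by [].
have d21 : i2 != i1 by [].
pose dg k := if k == i0 then z else if k == i1 then z else if k == i2 then z ^+ (m - 2) else 1.
pose g := monomial_mx 1 dg.
pose rs := [:: Tr m i0 i1 z; Tr m i0 i1 1; Tr m i1 i2 (z ^+ 2); Tr m i1 i2 1].
have rsr : forall r, r \in rs -> is_reflection m m r.
  move=> r; rewrite !inE => /or4P [] /eqP ->; apply: Tr_refl => //;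
    by rewrite ?expr1n // -exprM mulnC exprM zm expr1n.
have gE : g = foldr mulmx 1%:M rs.
  rewrite /= mulmx1 /Tr !monoM tperm2 mulg1 tperm2; apply: mono_eq => // k.
  rewrite /dg /tdiag; have [->|k0] := eqVneq k i0; [|have [->|k1] := eqVneq k i1;
    [|have [->|k2] := eqVneq k i2]]; bsimp.
  - by rewrite expr1n !mulr1.
  - by rewrite expr1n !mulr1 mul1r expr2 mulrA (mulrC (z ^+ m.-1) z) am1 // mul1r.
  - rewrite !mul1r mulr1 -exprM (_ : (2 * m.-1 = m + (m - 2))%N); last by lia.
    by rewrite exprD zm mul1r.
  - by rewrite !mulr1.
have gT : forall a b, (g^T - 1%:M) a b =
    if a == b then (if a \in [:: i0; i1; i2] then dg a - 1 else 0) else 0.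
  move=> a b; rewrite !mxE perm1 !inE /dg.
  have [->|ab] := eqVneq a b; last by rewrite subr0.
  by case: (b == i0); case: (b == i1); case: (b == i2); rewrite /= ?subrr.
have cod3 : codim g = 3%N.
  apply/eqP; rewrite eqn_leq codimE (@rank_le_diag _ _ (fun a => dg a - 1) _ gT) /=.
  apply: (@diag_minor _ _ _ (widen_ord n3)).
  - by move=> x y /(congr1 val) /= /val_inj.
  - by move=> a b ab; rewrite gT (negbTE ab).
  move=> x; rewrite gT eqxx; case: (ord3_cases x) => [|[|]] ->; rewrite /= ?inE ?eqxx ?orbT /dg /=;
    bsimp; rewrite subr_eq0.
  - by have := znz 1%N; rewrite expr1; apply; lia.
  - by have := znz 1%N; rewrite expr1; apply; lia.
  - by apply: znz; lia.
have dgp : \prod_k dg k = 1.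
  rewrite (bigD1 i0) // (bigD1 i1) // (bigD1 i2) //=.
  rewrite big1 /dg; last by move=> k /andP [/andP [k0 k1] k2]; bsimp.
  bsimp; rewrite mulr1 mulrA -expr2 -exprD (_ : (2 + (m - 2) = m)%N) //; lia.
have detg : \det g = 1 by rewrite /g mono_det odd_perm1 dgp mulr1.
exists g, 4%N; split.
- exists 1%g, dg; split => //; last by rewrite dgp divnn m0 expr1.
  move=> k; rewrite /dg; case: ifP => _; first by [].
  case: ifP => _; first by [].
  case: ifP => _; last by rewrite expr1n.
  by rewrite -exprM mulnC exprM zm expr1n.
- split; first by exists rs.
  move=> k hk [rs' [sz hr eq]].
  have : (k <= 2)%N \/ k = 3%N by lia.
  case=> [hk2|hk3].
    have := codim_prod hr; rewrite -eq sz cod3; lia.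
  have := det_prod m0 hr; rewrite -eq detg sz hk3 exprS sqrrN expr1n mulr1 => h.
  have : (1 + 1 : algC) == 0 by rewrite {1}h addNr.
  by rewrite -mulr2n pnatr_eq0.
- by rewrite cod3.
Qed.


Lemma det22 (R : comNzRingType) (M : 'M[R]_2) : \det M = M 0 0 * M 1 1 - M 0 1 * M 1 0.
Proof.
rewrite (expand_det_row M 0) !big_ord_recl big_ord0 /cofactor !det_mx11 /= !mxE /=.
have e1 : lift (0 : 'I_2) (0 : 'I_1) = 1 by apply/val_inj.
have e2 : lift (ord0 : 'I_2) (0 : 'I_1) = 1 by apply/val_inj.
have e3 : lift (lift (ord0 : 'I_2) (ord0 : 'I_1)) (0 : 'I_1) = 0 by apply/val_inj.
have e4 : lift (ord0 : 'I_2) (ord0 : 'I_1) = 1 by apply/val_inj.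
rewrite ?e1 ?e2 ?e3 ?e4 /bump /= ?expr0 ?expr1.
have -> : lift (1 : 'I_2) (0 : 'I_1) = 0 by apply/val_inj.
have -> : (ord0 : 'I_2) = 0 by apply/val_inj.
ring.
Qed.

Lemma minor2 n (A : 'M[algC]_n) (a b : 'I_n) :
  (\rank A <= 1)%N -> A a a * A b b - A a b * A b a = 0.
Proof.
move=> rk; apply/eqP; apply: contraTT rk => nz; rewrite -ltnNge.
pose f : 'I_2 -> 'I_n := fun x => if x == 0 then a else b.
apply: (@rank_mxsub _ _ f f); rewrite det22 !mxE /f /=.
by [].
Qed.

Lemma fixcols m p n (r1 r2 : 'M[algC]_n) (Dd : 'I_n -> algC) j :
  is_reflection m p r1 -> is_reflection m p r2 ->
  codim (monomial_mx 1 Dd) = 2%N -> r1 *m r2 = monomial_mx 1 Dd -> Dd j = 1 ->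
  (forall y, r1 y j = (j == y)%:R) /\ (forall y, r2 y j = (j == y)%:R).
Proof.
move=> h1 h2 cg e dj.
set g := monomial_mx 1 Dd in cg e.
pose K (r : 'M[algC]_n) := kermx (r^T - 1%:M).
have hK : forall r, is_reflection m p r -> \rank (K r) = n.-1 by move=> r [_ _ []].
have capg : ((K r1 :&: K r2)%MS <= K g)%MS.
  apply/sub_kermxP.
  have c1 : (K r1 :&: K r2)%MS *m (r1^T - 1%:M) = 0 by apply/sub_kermxP; exact: capmxSl.
  have c2 : (K r1 :&: K r2)%MS *m (r2^T - 1%:M) = 0 by apply/sub_kermxP; exact: capmxSr.
  move: c1 c2; rewrite -e trmx_mul !mulmxBr !mulmx1 => /eqP; rewrite subr_eq0 => /eqP c1.
  by move/eqP; rewrite subr_eq0 => /eqP c2; rewrite mulmxA c2 c1 subrr.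
have rKg : \rank (K g) = (n - 2)%N by rewrite mxrank_ker -codimE cg.
have rc := mxrank_sum_cap (K r1) (K r2).
have rs := rank_leq_col (K r1 + K r2)%MS.
rewrite !hK // in rc.
have := mxrank_leqif_eq capg; case=> le1 /esym.
have -> : \rank (K r1 :&: K r2)%MS == \rank (K g) by rewrite eqn_leq rKg; apply/andP; split; lia.
move/andP=> [_ sub].
pose e0 : 'rV[algC]_n := delta_mx 0 j.
have ej : (e0 <= K g)%MS.
  apply/sub_kermxP; rewrite -rowE; apply/matrixP=> a y; rewrite !mxE perm1.
  by case: (eqVneq j y) => [<-|_]; rewrite ?dj ?subrr // subr0.
have rowfix : forall r, (e0 <= K r)%MS -> forall y, r y j = (j == y)%:R.
  move=> r /sub_kermxP; rewrite -rowE => /matrixP h y; move: (h 0 y); rewrite !mxE => /eqP.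
  by rewrite subr_eq0 => /eqP.
split; apply: rowfix; apply: submx_trans ej (submx_trans sub _).
  exact: capmxSl.
exact: capmxSr.
Qed.

Lemma refl_two m p n (r : 'M[algC]_n) (s : 'S_n) d i0 i1 :
  i0 != i1 -> is_reflection m p r -> r = monomial_mx s d ->
  (\prod_i d i) ^+ (m %/ p) = 1 ->
  (forall j, j != i0 -> j != i1 -> forall y, r y j = (j == y)%:R) ->
  (s i0 = i0 /\ s i1 = i1 /\ d i0 ^+ (m %/ p) = 1) \/
  (s i0 = i1 /\ s i1 = i0 /\ d i0 * d i1 = 1).
Proof.
move=> i01 hr rE hp hfix.
have i10 : i1 != i0 by rewrite eq_sym.
have out : forall j, j != i0 -> j != i1 -> s j = j /\ d j = 1.
  move=> j j0 j1; have := hfix j j0 j1 j; rewrite eqxx rE monoE.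
  by case: eqP => [<- ->|_ /eqP]; [|rewrite eq_sym oner_eq0].
have ins : forall i, s i = i0 \/ s i = i1 -> True by [].
have sin : forall i, i = i0 \/ i = i1 -> s i = i0 \/ s i = i1.
  move=> i hi; case: (eqVneq (s i) i0) => [|h0]; first by left.
  case: (eqVneq (s i) i1) => [|h1]; first by right.
  have [e _] := out _ h0 h1; move/perm_inj: e => e.
  rewrite e in h0 h1; by case: hi => hi; subst i; rewrite eqxx in h0 h1.
have pd : \prod_i d i = d i0 * d i1.
  rewrite (bigD1 i0) // (bigD1 i1) //= big1 ?mulr1 // => k /andP [k0 k1].
  by have [] := out k k0 k1.
have hm := minor2 i0 i1 (eq_leq (refl_rank hr)).
rewrite !mxE rE !monoE (eq_sym i1 i0) (negbTE i01) eqxx subr0 in hm.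
case: (sin i0 (or_introl erefl)) => s0.
  have s1 : s i1 = i1.
    case: (sin i1 (or_intror erefl)) => // s1; move: s1; rewrite -s0 => /perm_inj.
    by move/eqP; rewrite (negbTE i10).
  left; split => //; split => //.
  rewrite s0 s1 !eqxx (negbTE i10) (negbTE i01) mul0r subr0 in hm.
  move/eqP: hm; rewrite mulf_eq0 !subr_eq0 => /orP [] /eqP h.
    by rewrite h expr1n.
  by move: hp; rewrite pd h mulr1.
have s1 : s i1 = i0.
  case: (sin i1 (or_intror erefl)) => // s1.
  have : s i1 = s i0 by rewrite s1 s0.
  by move/perm_inj/eqP; rewrite (negbTE i10).
right; split => //; split => //.
rewrite s0 s1 !eqxx (negbTE i10) (negbTE i01) in hm.
rewrite (_ : true%:R = 1 :> algC) // (_ : false%:R = 0 :> algC) // !subr0 in hm.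
apply/eqP; rewrite -subr_eq0 -oppr_eq0; apply/eqP; rewrite -hm; ring.
Qed.



Lemma partA m p n : (p %| m)%N -> (1 < p)%N -> (p < m)%N -> (2 <= n)%N ->
  exists (g : 'M[algC]_n) (k : nat),
    [/\ in_Gmpn m p g, refl_length_is m p g k & k <> codim g].
Proof.
move=> pm p1 pm' n2.
have m0 : (0 < m)%N by lia.
have [z zp] := C_prim_root_exists m0.
have zm : z ^+ m = 1 := prim_expr_order zp.
have znz : forall k, (0 < k < m)%N -> z ^+ k != 1.
  move=> k hk; rewrite -(prim_order_dvd zp); apply/negP => /dvdn_leq; lia.
have z1 : z != 1 by have := znz 1%N; rewrite expr1; apply; lia.
have z0 : z != 0.
  apply/eqP => z0; move: zm; rewrite z0 expr0n (gtn_eqF m0) => /eqP.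
  by rewrite eq_sym oner_eq0.
have mp : (m %/ p * p = m)%N by rewrite divnK.
have mp0 : (0 < m %/ p < m)%N.
  by rewrite divn_gt0 ?ltn_Pdiv //; lia.
pose i0 := widen_ord n2 (@Ordinal 2 0 isT).
pose i1 := widen_ord n2 (@Ordinal 2 1 isT).
have d01 : i0 != i1 by [].
have d10 : i1 != i0 by [].
pose dg k := if k == i0 then z else if k == i1 then z ^+ (p - 1) else 1.
pose g := monomial_mx 1 dg.
pose rs := [:: Tr m i0 i1 z; Tr m i0 i1 1; Dg i1 (z ^+ p)].
have rsr : forall r, r \in rs -> is_reflection m p r.
  move=> r; rewrite !inE => /or3P [] /eqP ->.
  - by apply: Tr_refl.
  - by apply: Tr_refl; rewrite ?expr1n.
  - apply: Dg_refl => //; last by apply: znz; lia.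
    by rewrite -exprM mulnC mp zm.
have gE : g = foldr mulmx 1%:M rs.
  rewrite /= mulmx1 /Tr /Dg !monoM mulg1 tperm2; apply: mono_eq => // k.
  rewrite /dg /tdiag /ddiag; have [->|k0] := eqVneq k i0; [|have [->|k1] := eqVneq k i1];
    bsimp.
  - by rewrite expr1n !mulr1.
  - rewrite mul1r -exprD (_ : (m.-1 + p = m + (p - 1))%N); last by lia.
    by rewrite exprD zm mul1r.
  - by rewrite !mulr1.
have gT : forall a b, (g^T - 1%:M) a b =
    if a == b then (if a \in [:: i0; i1] then dg a - 1 else 0) else 0.
  move=> a b; rewrite !mxE perm1 !inE /dg.
  have [->|ab] := eqVneq a b; last by rewrite subr0.
  by case: (b == i0); case: (b == i1); rewrite /= ?subrr.
have cod2 : codim g = 2%N.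
  apply/eqP; rewrite eqn_leq codimE (@rank_le_diag _ _ (fun a => dg a - 1) _ gT) /=.
  apply: (@diag_minor _ _ _ (widen_ord n2)).
  - by move=> x y /(congr1 val) /= /val_inj.
  - by move=> a b ab; rewrite gT (negbTE ab).
  move=> x; rewrite gT eqxx.
  have : x = @Ordinal 2 0 isT \/ x = @Ordinal 2 1 isT.
    by case: x => [[|[|k]] h]; [left|right|by []]; apply: val_inj.
  case=> ->; rewrite /= ?inE ?eqxx ?orbT /dg /=; bsimp; rewrite subr_eq0 //.
  by apply: znz; lia.
exists g, 3%N; split.
- exists 1%g, dg; split => //.
    move=> k; rewrite /dg; case: ifP => _; first by [].
    case: ifP => _; last by rewrite expr1n.
    by rewrite -exprM mulnC exprM zm expr1n.
  rewrite (bigD1 i0) // (bigD1 i1) //= big1 /dg; last by move=> k /andP [k0 k1]; bsimp.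
  bsimp; rewrite mulr1 -exprS (_ : (p - 1).+1 = p)%N; last by lia.
  by rewrite -exprM mulnC mp zm.
- split; first by exists rs.
  move=> k hk [rs' [sz hr eq]].
  have : (k <= 1)%N \/ k = 2%N by lia.
  case=> [hk1|hk2].
    have := codim_prod hr; rewrite -eq sz cod2; lia.
  rewrite hk2 in sz; case: rs' sz hr eq => [|r1 [|r2 [|]]] //= _ hr.
  rewrite mulmx1 => e; move/esym: e => e.
  have h1 := hr r1 (mem_head _ _).
  have h2 : is_reflection m p r2 by apply: hr; rewrite !inE eqxx orbT.
  have fix1 : forall j, j != i0 -> j != i1 -> forall y, r1 y j = (j == y)%:R.
    move=> j j0 j1; have [] := @fixcols _ _ _ r1 r2 dg j h1 h2 cod2 e; first by rewrite /dg; bsimp.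
    by [].
  have fix2 : forall j, j != i0 -> j != i1 -> forall y, r2 y j = (j == y)%:R.
    move=> j j0 j1; have [] := @fixcols _ _ _ r1 r2 dg j h1 h2 cod2 e; first by rewrite /dg; bsimp.
    by [].
  case: (h1) => [[s1 [d1 [e1 _ hp1]]] _ _].
  case: (h2) => [[s2 [d2 [e2 _ hp2]]] _ _].
  have c1 := refl_two d01 h1 e1 hp1 fix1.
  have c2 := refl_two d01 h2 e2 hp2 fix2.
  have g00 : d1 i0 * d2 (s1 i0) = z /\ s2 (s1 i0) = i0.
    have := congr1 (fun M : 'M[algC]_n => M i0 i0) e; rewrite /= e1 e2 monoM !monoE permM perm1 eqxx /dg eqxx.
    by case: eqP => [<-|_ h]; [|move: z0; rewrite -h eqxx].
  have g11 : d1 i1 * d2 (s1 i1) = z ^+ (p - 1).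
    have := congr1 (fun M : 'M[algC]_n => M i1 i1) e; rewrite /= e1 e2 monoM !monoE permM perm1 eqxx /dg eqxx.
    rewrite (negbTE d10); case: eqP => // _ h; move: (expf_neq0 (p - 1) z0).
    by rewrite -h eqxx.
  case: g00 => g0 gs.
  case: c1 => [[a0 [a1 a2]]|[b0 [b1 b2]]]; case: c2 => [[a0' [a1' a2']]|[b0' [b1' b2']]].
  + have := znz _ mp0; rewrite -g0 a0 exprMn a2 a2' mulr1 eqxx //.
  + by move: gs; rewrite a0 b0' => /eqP; rewrite (negbTE d10).
  + by move: gs; rewrite b0 a1' => /eqP; rewrite (negbTE d10).
  + have : z ^+ p = (d1 i0 * d1 i1) * (d2 i0 * d2 i1).
      rewrite (_ : p = (p - 1).+1); last by lia.
      rewrite exprS -g11 -g0 b0 b1; ring.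
    rewrite b2 b2' mulr1 => /eqP; apply/negP; apply: znz; lia.
- by rewrite cod2.
Qed.

Theorem mainTheorem8 :
  (forall m p n : nat, (p %| m)%N -> (1 < p)%N -> (p < m)%N -> (2 <= n)%N ->
     exists (g : 'M[algC]_n) (k : nat),
       [/\ in_Gmpn m p g, refl_length_is m p g k & k <> codim g]) /\
  (forall m n : nat, (3 <= m)%N -> (3 <= n)%N ->
     exists (g : 'M[algC]_n) (k : nat),
       [/\ in_Gmpn m m g, refl_length_is m m g k & k <> codim g]).
Proof. split; [exact: partA | exact: partB]. Qed.
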